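(* Let $\Psi\in\mathcal{H}$, and let $\ell_\Psi\in\mathbb{R}^2$ be its constant value on $\mathcal{S}_0$. Then there exists a family $(\tilde\Psi^\varepsilon)_{0<\varepsilon\le1}$ of smooth, compactly supported, divergence-free vector fields on $\overline{\mathcal{F}_0}$ such that $\tilde\Psi^\varepsilon=\ell_\Psi$ on $\partial\mathcal{S}_0$ for every $\varepsilon$, and $\|\nabla\tilde\Psi^\varepsilon\|_{L^\infty(\mathcal{F}_0)}\to0$ as $\varepsilon\to0^+$.
   Context: $\mathcal{S}_0$ is the closed unit disk in $\mathbb{R}^2$, $\mathcal{F}_0:=\mathbb{R}^2\setminus\mathcal{S}_0$, and $\mathcal{H}:=\{\Psi\in L^2(\mathbb{R}^2;\mathbb{R}^2):\operatorname{div}\Psi=0\text{ in }\mathbb{R}^2,\ \nabla\Psi=0\text{ in }\mathcal{S}_0\}$ (so each $\Psi\in\mathcal{H}$ is constant on $\mathcal{S}_0$). *)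

(* Defs.v *)
From HB Require Import structures.
From mathcomp Require Import all_boot all_order all_algebra.
From mathcomp Require Import all_classical all_reals all_analysis.
Set Implicit Arguments. Unset Strict Implicit. Unset Printing Implicit Defensive.
Import Order.TTheory GRing.Theory Num.Theory.
Import numFieldNormedType.Exports.
Local Open Scope classical_set_scope.
Local Open Scope ring_scope.

Section Defs.
Context {R : realType}.

Definition pt := (R * R)%type.
Definition sqn (x : pt) : R := x.1 ^+ 2 + x.2 ^+ 2.
Definition S0 : set pt := [set x | sqn x <= 1].
Definition S0int : set pt := [set x | sqn x < 1].
Definition F0 : set pt := [set x | 1 < sqn x].
Definition F0cl : set pt := [set x | 1 <= sqn x].

Definition dir (b : bool) : pt := if b then (1, 0) else (0, 1).
Definition pd (b : bool) (f : pt -> R) : pt -> R := fun x => 'D_(dir b) f x.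
Definition iter_pd (w : seq bool) (f : pt -> R) : pt -> R := foldr pd f w.
Definition vcomp (b : bool) (F : pt -> pt) : pt -> R :=
  fun x => if b then (F x).1 else (F x).2.

Definition smooth (f : pt -> R) : Prop :=
  forall w : seq bool, continuous (iter_pd w f) /\
    forall (b : bool) (x : pt), derivable (iter_pd w f) x (dir b).

Definition test_fun (U : set pt) (phi : pt -> R) : Prop :=
  smooth phi /\ exists K : set pt, compact K /\ K `<=` U /\
    forall x, ~ K x -> phi x = 0.

Definition leb2 := ((@lebesgue_measure R) \x (@lebesgue_measure R))%E.

Definition in_H (Psi : pt -> pt) : Prop :=
  (forall i, measurable_fun setT (vcomp i Psi)) /\
  (forall i, leb2.-integrable setT (fun x => ((vcomp i Psi x) ^+ 2)%:E)) /\
  (* div Psi = 0 in D'(R^2) *)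
  (forall phi, test_fun setT phi ->
     (\int[leb2]_x ((vcomp true Psi x * pd true phi x
                    + vcomp false Psi x * pd false phi x)%:E) = 0)%E) /\
  (* grad Psi = 0 in D'(interior of S_0) *)
  (forall phi, test_fun S0int phi -> forall i j,
     (\int[leb2]_x ((vcomp i Psi x * pd j phi x)%:E) = 0)%E).

End Defs.

(* Main.v *)
Require Import Defs.
From HB Require Import structures.
From mathcomp Require Import all_boot all_order all_algebra.
From mathcomp Require Import all_classical all_reals all_analysis.
From mathcomp Require Import ring lra.
Import Order.TTheory GRing.Theory Num.Theory.
Import numFieldNormedType.Exports.
Local Open Scope classical_set_scope.
Local Open Scope ring_scope.
Section OneD.
Context {R : realType}.
Implicit Types (f g u d : R -> R).

Fixpoint Q (n : nat) (g : R -> R) : Prop :=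
  match n with 0 => continuous g | n.+1 => (forall x : R, derivable g x (1:R)) /\ Q n (derive1 g) end.

Lemma scaleRE (a b : R) : a *: b = a * b. Proof. by []. Qed.

Lemma der_cont g x : derivable g x 1 -> {for x, continuous g}.
Proof. by move=> /derivable1_diffP /differentiable_continuous. Qed.

Lemma Q_cont n g : Q n g -> continuous g.
Proof. by case: n => [//|n] [dg _] x; apply: der_cont. Qed.

Lemma Q_le n g : Q n.+1 g -> Q n g.
Proof.
elim: n g => [|n IH] g /=; first by move=> [dg _] x; apply: der_cont.
by move=> [dg Hn]; split => //; apply: IH.
Qed.

Lemma der1_fun g dg : (forall x : R, is_derive x (1:R) g (dg x)) -> derive1 g = dg.
Proof. by move=> H; apply: funext => x; rewrite derive1E derive_val. Qed.

Lemma Q_cst n c : Q n (fun _ => c).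
Proof.
elim: n c => [|n IH] c /=; first by move=> x; apply: cvg_cst.
split; first by move=> x; apply: derivable_cst.
have -> : derive1 (fun _ : R => c) = (fun _ => 0) by apply: der1_fun => x; exact: is_derive_cst.
exact: IH.
Qed.

Lemma Q_id n : Q n id.
Proof.
case: n => [|n] /=; first by move=> x.
split; first by move=> x; apply: derivable_id.
have -> : derive1 (@id R) = (fun _ => 1) by apply: der1_fun => x; exact: is_derive_id.
exact: Q_cst.
Qed.

Lemma Q_add n f g : Q n f -> Q n g -> Q n (fun x => f x + g x).
Proof.
elim: n f g => [|n IH] f g /=; first by move=> cf cg x; exact: (continuousD (cf x) (cg x)).
move=> [df Hf] [dg Hg]; split.
  by move=> x; apply: (@derivableD _ _ _ f g).
have -> : derive1 (fun x => f x + g x) = (fun x => derive1 f x + derive1 g x).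
  apply: der1_fun => x; rewrite !derive1E; apply: (@is_deriveD _ _ _ f g); exact: derivableP.
exact: IH.
Qed.

Lemma Q_mul n f g : Q n f -> Q n g -> Q n (fun x => f x * g x).
Proof.
elim: n f g => [|n IH] f g /=; first by move=> cf cg x; exact: (continuousM (cf x) (cg x)).
move=> [df Hf] [dg Hg]; split.
  by move=> x; apply: (@derivableM _ _ f g).
have -> : derive1 (fun x => f x * g x) = (fun x => f x * derive1 g x + g x * derive1 f x).
  apply: der1_fun => x; rewrite !derive1E.
  exact: (@is_deriveM _ _ f g x 1 _ _ (derivableP (df x)) (derivableP (dg x))).
by apply: Q_add; apply: IH => //; apply: Q_le; split.
Qed.

Lemma Q_comp n g u : Q n g -> Q n u -> Q n (fun x => g (u x)).
Proof.
elim: n g u => [|n IH] g u /=.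
  by move=> cg cu x; apply: continuous_comp; [apply: cu|apply: cg].
move=> [dg Hg] [du Hu]; split.
  by move=> x; have [] := @is_derive1_comp _ g u x _ _ (derivableP (dg (u x))) (derivableP (du x)).
have -> : derive1 (fun x => g (u x)) = (fun x => derive1 g (u x) * derive1 u x).
  apply: der1_fun => x; rewrite !derive1E.
  exact: (@is_derive1_comp _ g u x _ _ (derivableP (dg (u x))) (derivableP (du x))).
by apply: Q_mul; [apply: IH => //; apply: Q_le; split|].
Qed.

Lemma Q_inv n d : (forall x, d x != 0) -> Q n d -> Q n (fun x => (d x)^-1).
Proof.
move=> d0; elim: n d d0 => [|n IH] d d0 /=.
  by move=> cd x; exact: (continuousV (d0 x) (cd x)).
move=> [dd Hd]; split.
  by move=> x; apply: derivableV.
have -> : derive1 (fun x => (d x)^-1) = (fun x => (-1) * ((d x)^-1 * (d x)^-1) * derive1 d x).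
  apply: der1_fun => x; rewrite derive1E.
  apply: is_derive_eq; first exact: (is_deriveV (d0 x) (derivableP (dd x))).
  by rewrite scaleRE; field; exact: d0.
apply: Q_mul; last by [].
apply: Q_mul; first exact: Q_cst.
by apply: Q_mul; apply: IH => //; apply: Q_le; split.
Qed.

Lemma Q_exp n : Q n expR.
Proof.
elim: n => [|n IH] /=; first exact: continuous_expR.
split; first exact: derivable_expR.
have -> : derive1 (@expR R) = expR by apply: der1_fun => x; exact: is_derive_expR.
exact: IH.
Qed.


Lemma poly_bound (p : {poly R}) (s : R) : 1 <= s ->
  `|p.[s]| <= (\sum_(i < size p) `|p`_i|) * s ^+ size p.
Proof.
move=> s1; rewrite horner_coef mulr_suml.
apply: (le_trans (ler_norm_sum _ _ _)); apply: ler_sum => i _.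
rewrite normrM ler_wpM2l // ger0_norm ?exprn_ge0 ?(le_trans _ s1) //.
by apply: ler_weXn2l => //; apply: ltnW.
Qed.

Lemma KL (p : {poly R}) (e : R) : 0 < e -> exists2 d : R, 0 < d &
  forall t, 0 < t < d -> `|p.[t^-1] * expR (- t^-1)| <= e * t.
Proof.
move=> e0.
set k := size p; set A := \sum_(i < k) `|p`_i|.
set C := A * (k.+2)`!%:R.
have A0 : 0 <= A by apply: sumr_ge0 => i _.
have C0 : 0 <= C by apply: mulr_ge0.
exists (Num.min 1 (e / (C + 1))).
  by rewrite lt_min ltr01 /= divr_gt0 // ltr_wpDl.
move=> t /andP[t0]; rewrite lt_min => /andP[t1 te].
set s := t^-1.
have s1 : 1 <= s by rewrite /s -invr1 lef_pV2 ?posrE // ltW.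
have s0 : 0 < s by rewrite /s invr_gt0.
have Hexp : s ^+ k.+2 <= (k.+2)`!%:R * expR s.
  have := expR_ge1Dxn k.+1 (ltW s0).
  rewrite -ler_pdivrMl ?ltr0n ?fact_gt0 //.
  move=> H; apply: le_trans H; rewrite mulrC lerDr //.
rewrite normrM (ger0_norm (expR_ge0 _)).
apply: (@le_trans _ _ (A * s ^+ k * expR (- s))).
  by rewrite ler_wpM2r ?expR_ge0 // poly_bound.
have st : s * t = 1 by rewrite /s mulVf // gt_eqF.
have -> : A * s ^+ k * expR (- s) = A * (s ^+ k.+2 * expR (- s)) * (t * t).
  rewrite -addn2 exprD expr2.
  transitivity (A * s ^+ k * expR (- s) * ((s * t) * (s * t))); first by rewrite st !mulr1.
  ring.
apply: (@le_trans _ _ (C * (t * t))).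
  have tt0 : 0 <= t * t by rewrite mulr_ge0 // ltW.
  rewrite ler_wpM2r // /C ler_wpM2l //.
  by rewrite expRN ler_pdivrMr ?expR_gt0.
have tC : C * t <= e.
  apply: (@le_trans _ _ ((C + 1) * t)); first by rewrite ler_wpM2r ?(ltW t0) // lerDl.
  by rewrite mulrC -ler_pdivlMr ?ltr_wpDl // (ltW te).
by rewrite mulrA ler_wpM2r ?(ltW t0).
Qed.

Definition hp (p : {poly R}) (t : R) : R :=
  if 0 < t then p.[t^-1] * expR (- t^-1) else 0.
Definition qd (p : {poly R}) : {poly R} := 'X^2 * (p - deriv p).

Lemma hp_cvg0 p : (fun h : R => h^-1 *: (hp p (h *: 1 + 0) - hp p 0)) @ 0^' --> (0:R).
Proof.
apply/cvgrPdist_le => eps eps0.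
have [d d0 Hd] := @KL p eps eps0.
near=> h.
have hd : `|h| < d by near: h; apply: dnbhs0_lt.
have hn0 : h != 0 by near: h; exists d => //= y _.
rewrite /hp ltxx subr0 scaleRE [h *: 1]scaleRE mulr1 addr0 sub0r normrN.
case: ifP => h0; last by rewrite mulr0 normr0 ltW.
have hi : 0 <= h^-1 by rewrite invr_ge0 ltW.
rewrite normrM (ger0_norm hi) ler_pdivrMl //.
rewrite [h * eps]mulrC. apply: Hd; rewrite h0 /=.
by rewrite -(gtr0_norm h0).
Unshelve. all: by end_near. Qed.

Lemma hp_der0 p : is_derive (0:R) 1 (hp p) 0.
Proof.
have H := hp_cvg0 p.
apply: DeriveDef; first by apply/cvg_ex; exists 0.
exact: cvg_lim.
Qed.


Lemma hp_derpos (p : {poly R}) (t : R) : 0 < t -> is_derive t 1 (hp p) (hp (qd p) t).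
Proof.
move=> t0.
have tn0 : t != 0 by rewrite gt_eqF.
have Di : is_derive t 1 (fun y : R => y^-1) (- t ^- 2).
  apply: is_derive_eq; first exact: (@is_deriveV R id t 1 1 tn0 (is_derive_id _ _)).
  by rewrite scaleRE mulr1.
have Dp : is_derive t 1 (fun y : R => p.[y^-1]) ((deriv p).[t^-1] * (- t ^- 2)).
  exact: (is_derive1_comp (is_derive_poly p t^-1) Di).
have Dn : is_derive t 1 (fun y : R => - y^-1) (t ^- 2).
  by have := @is_deriveN _ _ _ (fun y : R => y^-1) t 1 _ Di; rewrite opprK.
have De : is_derive t 1 (fun y : R => expR (- y^-1)) (expR (- t^-1) * t ^- 2).
  exact: (@is_derive1_comp R expR (fun y : R => - y^-1) t _ _ (is_derive_expR _) Dn).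
have DM := is_deriveM Dp De.
apply: (@near_eq_is_derive _ _ _ (fun y : R => p.[y^-1] * expR (- y^-1)) (hp p) t 1).
  near=> y; rewrite /hp ifT //; near: y; exact: lt_nbhsr.
apply: (is_derive_eq DM).
rewrite /hp t0 /qd hornerM hornerXn !hornerE !scaleRE /=.
rewrite -exprVn. ring.
Unshelve. all: by end_near. Qed.

Lemma hp_derneg (p : {poly R}) (t : R) : t < 0 -> is_derive t 1 (hp p) (hp (qd p) t).
Proof.
move=> t0.
apply: (@near_eq_is_derive _ _ _ (fun _ => 0)).
  near=> y; rewrite /hp ifF //; apply/negbTE; rewrite -leNgt ltW //; near: y; exact: lt_nbhsl.
rewrite /hp ifF; first exact: is_derive_cst.
by apply/negbTE; rewrite -leNgt ltW.
Unshelve. all: by end_near. Qed.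

Lemma hp_der (p : {poly R}) (t : R) : is_derive t 1 (hp p) (hp (qd p) t).
Proof.
have [t0|t0|->] := ltgtP t 0; [exact: hp_derneg|exact: hp_derpos|].
by rewrite {2}/hp ltxx; exact: hp_der0.
Qed.

Lemma Q_hp n p : Q n (hp p).
Proof.
elim: n p => [|n IH] p /=.
  by move=> x; have [+ _] := hp_der p x; apply: der_cont.
split; first by move=> x; have [] := hp_der p x.
have -> : derive1 (hp p) = hp (qd p) by apply: der1_fun => x; exact: hp_der.
exact: IH.
Qed.


Definition hh : R -> R := hp 1.
Lemma hh_pos t : 0 < t -> 0 < hh t.
Proof. by move=> t0; rewrite /hh /hp t0 hornerC mul1r expR_gt0. Qed.
Lemma hh_zero t : t <= 0 -> hh t = 0.
Proof. by move=> t0; rewrite /hh /hp ifF //; apply/negbTE; rewrite -leNgt. Qed.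
Lemma hh_ge0 t : 0 <= hh t.
Proof. by have [t0|t0] := ltP 0 t; [rewrite ltW // hh_pos|rewrite hh_zero]. Qed.

Definition den (t : R) := hh (3 - t) + hh (t - 2).
Definition gb (t : R) := hh (3 - t) * (den t)^-1.

Lemma den_pos t : 0 < den t.
Proof.
rewrite /den; have [t3|t3] := ltP t 3.
  have H1 : 0 < hh (3 - t) by apply: hh_pos; rewrite subr_gt0.
  have H2 := hh_ge0 (t - 2); lra.
have H1 : 0 < hh (t - 2) by apply: hh_pos; rewrite subr_gt0 (lt_le_trans _ t3) // ltr_nat.
have H2 := hh_ge0 (3 - t); lra.
Qed.

Lemma Q_affine n (a b : R) : Q n (fun t => a * t + b).
Proof. by apply: Q_add; [apply: Q_mul; [apply: Q_cst|apply: Q_id]|apply: Q_cst]. Qed.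

Lemma Q_gb n : Q n gb.
Proof.
have Q1 : Q n (fun t => hh (3 - t)).
  have -> : (fun t => hh (3 - t)) = (fun t => hh ((-1) * t + 3)).
    by apply: funext => t; rewrite mulN1r addrC.
  by apply: Q_comp; [apply: Q_hp|apply: Q_affine].
have Q2 : Q n (fun t => hh (t - 2)).
  have -> : (fun t => hh (t - 2)) = (fun t => hh (1 * t + (-2))).
    by apply: funext => t; rewrite mul1r.
  by apply: Q_comp; [apply: Q_hp|apply: Q_affine].
apply: Q_mul => //; apply: Q_inv; first by move=> t; rewrite gt_eqF // den_pos.
exact: Q_add.
Qed.

Lemma gb_one t : t <= 2 -> gb t = 1.
Proof.
move=> t2; have H : hh (t - 2) = 0 by rewrite hh_zero // subr_le0.
rewrite /gb /den H addr0 mulfV //.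
by rewrite gt_eqF // hh_pos // subr_gt0 (le_lt_trans t2) // ltr_nat.
Qed.

Lemma gb_zero t : 3 <= t -> gb t = 0.
Proof. by move=> t3; rewrite /gb hh_zero ?mul0r // subr_le0. Qed.

Lemma der_loc_left (F : R -> R) (a c : R) : (forall y, y < a -> F y = c) ->
  forall y, y < a -> derive1 F y = 0.
Proof.
move=> HF y ya; rewrite derive1E.
have -> : 'D_1 F y = 'D_1 (fun _ : R => c) y.
  apply: near_eq_derive; near=> z; apply: HF; near: z; exact: lt_nbhsl.
by rewrite derive_cst.
Unshelve. all: by end_near. Qed.

Lemma der_loc_right (F : R -> R) (a c : R) : (forall y, a < y -> F y = c) ->
  forall y, a < y -> derive1 F y = 0.
Proof.
move=> HF y ya; rewrite derive1E.
have -> : 'D_1 F y = 'D_1 (fun _ : R => c) y.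
  apply: near_eq_derive; near=> z; apply: HF; near: z; exact: lt_nbhsr.
by rewrite derive_cst.
Unshelve. all: by end_near. Qed.

Definition g1 := derive1 gb.
Definition g2 := derive1 g1.

Lemma g1_left y : y < 2 -> g1 y = 0.
Proof. by apply: der_loc_left => z z2; apply: gb_one; apply: ltW. Qed.
Lemma g1_right y : 3 < y -> g1 y = 0.
Proof. by apply: der_loc_right => z z2; apply: gb_zero; apply: ltW. Qed.
Lemma g2_left y : y < 2 -> g2 y = 0.
Proof. by apply: der_loc_left; apply: g1_left. Qed.
Lemma g2_right y : 3 < y -> g2 y = 0.
Proof. by apply: der_loc_right; apply: g1_right. Qed.

Lemma bounded_cont (F : R -> R) : continuous F ->
  (forall y, y < 2 -> F y = 0) -> (forall y, 3 < y -> F y = 0) ->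
  exists B : R, 0 <= B /\ forall y, `|F y| <= B.
Proof.
move=> cF Fl Fr.
have cN : continuous (fun t => `|F t|).
  by move=> x; apply: continuous_comp; [exact: cF|exact: norm_continuous].
have [c _ Hc] := @EVT_max R (fun t => `|F t|) 2 3 (ler_nat _ 2 3)
  (continuous_subspaceT cN).
exists `|F c|; split => // y.
have [y2|y2] := ltP y 2; first by rewrite Fl // normr0.
have [y3|y3] := leP y 3; first by apply: Hc; rewrite in_itv /= y2 y3.
by rewrite Fr // normr0.
Qed.

End OneD.

Section TwoD.
Context {R : realType}.
Implicit Types (f u : @pt R -> R) (x v : @pt R).
Lemma D1 f x v : 'D_v f x = derive1 (fun h : R => f (h *: v + x)) 0.
Proof.
rewrite /derive /derive1.
have -> : (fun h : R => h^-1 *: (f ((h + 0) *: v + x) - f (0 *: v + x))) = (fun h : R => h^-1 *: (f (h *: v + x) - f x)).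
  by apply: funext => h; rewrite addr0 scale0r add0r.
by [].
Qed.

Lemma cont_fst : continuous (fun x : @pt R => x.1).
Proof. move=> x; exact: cvg_fst. Qed.
Lemma cont_snd : continuous (fun x : @pt R => x.2).
Proof. move=> x; exact: cvg_snd. Qed.

Lemma is_derive_comp2 (phi : R -> R) u x v du :
  is_derive x v u du -> derivable phi (u x) 1 ->
  is_derive x v (fun y => phi (u y)) (derive1 phi (u x) * du).
Proof.
move=> [du1 <-] dphi.
have dl : derivable (fun h : R => u (h *: v + x)) 0 1 by exact: (iffLR (derivable1P u x v) du1).
have e0 : (fun h : R => u (h *: v + x)) 0 = u x by rewrite /= scale0r add0r.
have dphi' : is_derive ((fun h : R => u (h *: v + x)) 0) 1 phi (derive1 phi (u x)).
  by rewrite e0 derive1E; apply: derivableP.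
have := is_derive1_comp dphi' (derivableP dl).
move=> [Hd Hv].
apply: DeriveDef.
  by apply: (iffRL (derivable1P _ x v)); exact: Hd.
rewrite D1 derive1E Hv D1 derive1E.
by rewrite derive1E.
Qed.

Fixpoint P (n : nat) (f : @pt R -> R) : Prop :=
  continuous f /\ match n with 0 => True
    | n.+1 => (forall b x, derivable f x (dir b)) /\ forall b, P n (pd b f) end.

Lemma P_le n f : P n.+1 f -> P n f.
Proof.
elim: n f => [|n IH] f /=; first by move=> [].
by move=> [cf [df Hf]]; split => //; split => // b; apply: IH.
Qed.

Lemma pd_fun b f (df : pt -> R) : (forall x, is_derive x (dir b) f (df x)) -> pd b f = df.
Proof. by move=> H; apply: funext => x; rewrite /pd derive_val. Qed.

Lemma P_cst n (c : R) : P n (fun _ => c).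
Proof.
elim: n c => [|n IH] c /=; first by split => // x; apply: cvg_cst.
split; first by move=> x; apply: cvg_cst.
split; first by move=> b x; apply: derivable_cst.
move=> b; have -> : pd b (fun _ : pt => c) = (fun _ => 0).
  by apply: pd_fun => x; exact: is_derive_cst.
exact: IH.
Qed.

Lemma is_derive_aff (a b t : R) : is_derive t (1:R) (fun h : R => h * a + b) a.
Proof.
have H1 := @is_deriveM _ _ id (fun _ => a) t 1 1 0 (is_derive_id _ _) (is_derive_cst _ _ _).
have H2 := @is_deriveD _ _ _ _ (fun _ => b) t 1 _ 0 H1 (is_derive_cst _ _ _).
apply: (is_derive_eq H2).
by rewrite scaler0 add0r addr0; exact: mulr1.
Qed.

Lemma is_derive_fst x v : is_derive x v (fun y : @pt R => y.1) v.1.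
Proof.
have E : (fun h : R => (h *: v + x).1) = (fun h => h * v.1 + x.1) by [].
have A := is_derive_aff v.1 x.1 0.
apply: DeriveDef.
  by apply: (iffRL (derivable1P _ x v)); rewrite E; case: A.
by rewrite D1 derive1E E derive_val.
Qed.

Lemma is_derive_snd x v : is_derive x v (fun y : @pt R => y.2) v.2.
Proof.
have E : (fun h : R => (h *: v + x).2) = (fun h => h * v.2 + x.2) by [].
have A := is_derive_aff v.2 x.2 0.
apply: DeriveDef.
  by apply: (iffRL (derivable1P _ x v)); rewrite E; case: A.
by rewrite D1 derive1E E derive_val.
Qed.

Lemma P_fst n : P n (fun x => x.1).
Proof.
case: n => [|n] /=; first by split => //; exact: cont_fst.
split; first exact: cont_fst.
split; first by move=> b x; have [] := is_derive_fst x (dir b).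
move=> b; have -> : pd b (fun x : @pt R => x.1) = (fun _ => (dir b).1).
  by apply: (@pd_fun b (fun x : @pt R => x.1)) => x; exact: is_derive_fst.
exact: P_cst.
Qed.

Lemma P_snd n : P n (fun x => x.2).
Proof.
case: n => [|n] /=; first by split => //; exact: cont_snd.
split; first exact: cont_snd.
split; first by move=> b x; have [] := is_derive_snd x (dir b).
move=> b; have -> : pd b (fun x : @pt R => x.2) = (fun _ => (dir b).2).
  by apply: (@pd_fun b (fun x : @pt R => x.2)) => x; exact: is_derive_snd.
exact: P_cst.
Qed.

Lemma P_add n f g : P n f -> P n g -> P n (fun x => f x + g x).
Proof.
elim: n f g => [|n IH] f g /=.
  by move=> [cf _] [cg _]; split => // x; exact: (continuousD (cf x) (cg x)).
move=> [cf [df Hf]] [cg [dg Hg]]; split; first by move=> x; exact: (continuousD (cf x) (cg x)).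
split; first by move=> b x; apply: (@derivableD _ _ _ f g).
move=> b; have -> : pd b (fun x => f x + g x) = (fun x => pd b f x + pd b g x).
  apply: pd_fun => x; apply: (@is_deriveD _ _ _ f g); exact: derivableP.
exact: IH.
Qed.

Lemma P_mul n f g : P n f -> P n g -> P n (fun x => f x * g x).
Proof.
elim: n f g => [|n IH] f g /=.
  by move=> [cf _] [cg _]; split => // x; exact: (continuousM (cf x) (cg x)).
move=> [cf [df Hf]] [cg [dg Hg]]; split; first by move=> x; exact: (continuousM (cf x) (cg x)).
split; first by move=> b x; apply: (@derivableM _ _ f g).
move=> b; have -> : pd b (fun x => f x * g x) = (fun x => f x * pd b g x + g x * pd b f x).
  apply: pd_fun => x.
  exact: (@is_deriveM _ _ f g x (dir b) _ _ (derivableP (df b x)) (derivableP (dg b x))).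
by apply: P_add; apply: IH => //; apply: P_le => /=.
Qed.

Lemma P_comp n (phi : R -> R) u : Q n phi -> P n u -> P n (fun x => phi (u x)).
Proof.
elim: n phi u => [|n IH] phi u /=.
  by move=> cphi [cu _]; split => // x; apply: continuous_comp; [apply: cu|apply: cphi].
move=> [dphi Hphi] [cu [du Hu]]; split.
  move=> x; apply: continuous_comp; first exact: cu.
  by apply: der_cont.
split; first by move=> b x; have [] := @is_derive_comp2 phi u x (dir b) _ (derivableP (du b x)) (dphi (u x)).
move=> b; have -> : pd b (fun x => phi (u x)) = (fun x => derive1 phi (u x) * pd b u x).
  by apply: pd_fun => x; exact: (@is_derive_comp2 phi u x (dir b) _ (derivableP (du b x)) (dphi (u x))).
by apply: P_mul; [apply: IH => //; apply: P_le|].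
Qed.

Lemma smooth_P f : (forall n, P n f) -> smooth f.
Proof.
move=> H w.
suff : forall n, P n (iter_pd w f).
  move=> Hn; split; first by have [] := Hn 0%N.
  by move=> b x; have [_ [Hd _]] := Hn 1%N.
elim: w => [//|b w IH] n /=.
by have [_ [_ Hn]] := IH n.+1; apply: Hn.
Qed.

End TwoD.

Section Constr.
Context {R : realType}.
Implicit Types (f g : @pt R -> R) (x v : @pt R).

Lemma isdM f g x v df dg : is_derive x v f df -> is_derive x v g dg ->
  is_derive x v (fun y => f y * g y) (f x * dg + g x * df).
Proof. by move=> Hf Hg; exact: (is_derive_eq (is_deriveM Hf Hg)). Qed.
Lemma isdD f g x v df dg : is_derive x v f df -> is_derive x v g dg ->
  is_derive x v (fun y => f y + g y) (df + dg).
Proof. by move=> Hf Hg; exact: (is_derive_eq (is_deriveD Hf Hg)). Qed.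
Lemma isdB f g x v df dg : is_derive x v f df -> is_derive x v g dg ->
  is_derive x v (fun y => f y - g y) (df - dg).
Proof. by move=> Hf Hg; exact: (is_derive_eq (is_deriveB Hf Hg)). Qed.
Arguments isdM {f g x v df dg}.
Arguments isdD {f g x v df dg}.
Arguments isdB {f g x v df dg}.
Lemma isdC (k : R) x v : is_derive x v (fun _ : @pt R => k) 0.
Proof. exact: is_derive_cst. Qed.

Lemma Q_g1 n : Q n (@g1 R).
Proof. by have [] := @Q_gb R n.+1. Qed.
Lemma Q_g2 n : Q n (@g2 R).
Proof. by have [] := @Q_g1 n.+1. Qed.
Lemma der_gb (t : R) : derivable gb t 1.
Proof. by have [] := @Q_gb R 1. Qed.
Lemma der_g1 (t : R) : derivable g1 t 1.
Proof. by have [] := @Q_g1 1. Qed.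

Variables (c : R) (l : @pt R).

Definition U x := c * sqn x.
Definition Fs x := l.1 * x.2 - l.2 * x.1.
Definition Ps1 x := gb (U x) * l.1 + Fs x * (g1 (U x) * (2 * c * x.2)).
Definition Ps2 x := gb (U x) * l.2 - Fs x * (g1 (U x) * (2 * c * x.1)).
Definition dU x v := c * (2 * x.1 * v.1 + 2 * x.2 * v.2).
Definition DPs1 x v := g1 (U x) * dU x v * l.1 + ((l.1 * v.2 - l.2 * v.1) * (g1 (U x) * (2 * c * x.2))
   + Fs x * (g2 (U x) * dU x v * (2 * c * x.2) + g1 (U x) * (2 * c * v.2))).
Definition DPs2 x v := g1 (U x) * dU x v * l.2 - ((l.1 * v.2 - l.2 * v.1) * (g1 (U x) * (2 * c * x.1))
   + Fs x * (g2 (U x) * dU x v * (2 * c * x.1) + g1 (U x) * (2 * c * v.1))).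

Lemma U_der x v : is_derive x v U (dU x v).
Proof.
have -> : U = (fun y => c * (y.1 * y.1 + y.2 * y.2)).
  by apply: funext => y; rewrite /U /sqn !expr2.
have HH := (isdM (isdC c x v) (isdD (isdM (is_derive_fst x v) (is_derive_fst x v))
                                  (isdM (is_derive_snd x v) (is_derive_snd x v)))).
apply: (is_derive_eq HH); rewrite /=.
by rewrite /dU; ring.
Qed.

Lemma Fs_der x v : is_derive x v Fs (l.1 * v.2 - l.2 * v.1).
Proof.
have HH := (isdB (isdM (isdC l.1 x v) (is_derive_snd x v)) (isdM (isdC l.2 x v) (is_derive_fst x v))).
apply: (is_derive_eq HH); rewrite /=.
by ring.
Qed.

Lemma gbU_der x v : is_derive x v (fun y => gb (U y)) (g1 (U x) * dU x v).
Proof. exact: (is_derive_comp2 gb U x v _ (U_der x v) (der_gb _)). Qed.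
Lemma g1U_der x v : is_derive x v (fun y => g1 (U y)) (g2 (U x) * dU x v).
Proof. exact: (is_derive_comp2 g1 U x v _ (U_der x v) (der_g1 _)). Qed.

Lemma Ps1_der x v : is_derive x v Ps1 (DPs1 x v).
Proof.
have H2 : is_derive x v (fun y => 2 * c * y.2) (2 * c * v.2).
  have HH := (isdM (isdC (2 * c) x v) (is_derive_snd x v)).
  apply: (is_derive_eq HH); rewrite /=.
  by ring.
have HH := (isdD (isdM (gbU_der x v) (isdC l.1 x v)) (isdM (Fs_der x v) (isdM (g1U_der x v) H2))).
apply: (is_derive_eq HH); rewrite /=.
by rewrite /DPs1; ring.
Qed.

Lemma Ps2_der x v : is_derive x v Ps2 (DPs2 x v).
Proof.
have H2 : is_derive x v (fun y => 2 * c * y.1) (2 * c * v.1).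
  have HH := (isdM (isdC (2 * c) x v) (is_derive_fst x v)).
  apply: (is_derive_eq HH); rewrite /=.
  by ring.
have HH := (isdB (isdM (gbU_der x v) (isdC l.2 x v)) (isdM (Fs_der x v) (isdM (g1U_der x v) H2))).
apply: (is_derive_eq HH); rewrite /=.
by rewrite /DPs2; ring.
Qed.


Lemma P_sub n f g : P n f -> P n g -> P n (fun x => f x - g x).
Proof.
move=> Hf Hg; have := P_add _ _ _ Hf (P_mul _ _ _ (P_cst n (-1)) Hg).
by have -> : (fun x => f x + -1 * g x) = (fun x => f x - g x) by apply: funext => x; rewrite mulN1r.
Qed.

Lemma P_U n : P n U.
Proof.
have -> : U = (fun y => c * (y.1 * y.1 + y.2 * y.2)).
  by apply: funext => y; rewrite /U /sqn !expr2.
by apply: P_mul; [apply: P_cst|apply: P_add; apply: P_mul; (apply: P_fst || apply: P_snd)].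
Qed.

Lemma P_Fs n : P n Fs.
Proof. by apply: P_sub; apply: P_mul; (apply: P_cst || apply: P_fst || apply: P_snd). Qed.

Lemma P_Ps1 n : P n Ps1.
Proof.
apply: P_add; first by apply: P_mul; [apply: P_comp; [apply: Q_gb|apply: P_U]|apply: P_cst].
apply: P_mul; first exact: P_Fs.
apply: P_mul; first by apply: P_comp; [apply: Q_g1|apply: P_U].
by apply: P_mul; [apply: P_cst|apply: P_snd].
Qed.

Lemma P_Ps2 n : P n Ps2.
Proof.
apply: P_sub; first by apply: P_mul; [apply: P_comp; [apply: Q_gb|apply: P_U]|apply: P_cst].
apply: P_mul; first exact: P_Fs.
apply: P_mul; first by apply: P_comp; [apply: Q_g1|apply: P_U].
by apply: P_mul; [apply: P_cst|apply: P_fst].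
Qed.

Lemma div_free x : DPs1 x (dir true) + DPs2 x (dir false) = 0.
Proof. by rewrite /DPs1 /DPs2 /dU /Fs /dir /=; ring. Qed.

Lemma bdry x : c <= 1 -> sqn x = 1 -> Ps1 x = l.1 /\ Ps2 x = l.2.
Proof.
move=> c1 sx; have Ux : U x < 2 by rewrite /U sx mulr1 (le_lt_trans c1) // ltr1n.
rewrite /Ps1 /Ps2 gb_one ?ltW // g1_left //.
by split; ring.
Qed.

Lemma supp x : 0 < c -> 3 / c < sqn x -> Ps1 x = 0 /\ Ps2 x = 0.
Proof.
move=> c0 sx; have Ux : 3 < U x by rewrite /U mulrC -ltr_pdivrMr.
rewrite /Ps1 /Ps2 gb_zero ?ltW // g1_right //.
by split; ring.
Qed.

End Constr.

Section Bound.
Context {R : realType}.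

Lemma nbM (a b A B : R) : `|a| <= A -> `|b| <= B -> `|a * b| <= A * B.
Proof. by move=> ha hb; rewrite normrM ler_pM. Qed.
Lemma nbD (a b A B : R) : `|a| <= A -> `|b| <= B -> `|a + b| <= A + B.
Proof. by move=> ha hb; apply: le_trans (ler_normD _ _) _; apply: lerD. Qed.
Lemma nbB (a b A B : R) : `|a| <= A -> `|b| <= B -> `|a - b| <= A + B.
Proof. by move=> ha hb; apply: le_trans (ler_normB _ _) _; apply: lerD. Qed.
Lemma n2 : `|2 : R| <= 2.
Proof. by rewrite ger0_norm. Qed.

Ltac bnd := repeat first [apply: nbB | apply: nbD | apply: nbM | assumption | exact: n2 | by rewrite normr1].

Lemma bound_lemma (l : @pt R) : exists K : R, 0 <= K /\ forall eps : R, 0 < eps -> forall x b,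
  `|DPs1 (eps^+2) l x (dir b)| <= eps * K /\ `|DPs2 (eps^+2) l x (dir b)| <= eps * K.
Proof.
have cg1 : continuous (@g1 R) := (@Q_cont R 0 _ (Q_g1 0)).
have cg2 : continuous (@g2 R) := (@Q_cont R 0 _ (Q_g2 0)).
have [B1 [B10 HB1]] := bounded_cont _ cg1 g1_left g1_right.
have [B2 [B20 HB2]] := bounded_cont _ cg2 g2_left g2_right.
set L := `|l.1| + `|l.2|.
have L0 : 0 <= L by rewrite addr_ge0.
have hl1 : `|l.1| <= L by rewrite lerDl.
have hl2 : `|l.2| <= L by rewrite lerDr.
set K := B1*(2*(2*1+2*1))*L + ((L*1+L*1)*(B1*(2*2)) + (L*2+L*2)*(B2*(2*(2*1+2*1))*(2*2) + B1*(2*1))).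
have K0 : 0 <= K.
  by rewrite /K; repeat (apply: addr_ge0 || apply: mulr_ge0) => //.
exists K; split => // eps e0 x b.
set u := U (eps^+2) x.
have [[G1 G2]|Hin] : (g1 u = 0 /\ g2 u = 0) \/ (2 <= u <= 3).
  case: (ltP u 2) => [u2|u2]; first by left; rewrite g1_left ?g2_left.
  case: (leP u 3) => [u3|u3]; first by right; apply/andP.
  by left; rewrite g1_right ?g2_right.
  have -> : DPs1 (eps^+2) l x (dir b) = 0 by rewrite /DPs1 -/u G1 G2; ring.
  have -> : DPs2 (eps^+2) l x (dir b) = 0 by rewrite /DPs2 -/u G1 G2; ring.
  by rewrite normr0 mulr_ge0 // ltW.
have hsq : (eps * x.1)^+2 + (eps * x.2)^+2 <= 3.
  have <- : u = (eps * x.1)^+2 + (eps * x.2)^+2 by rewrite /u /U /sqn; ring.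
  by case/andP: Hin.
have hy1 : `|eps * x.1| <= 2.
  rewrite ler_norml; apply/andP; split; nra.
have hy2 : `|eps * x.2| <= 2.
  rewrite ler_norml; apply/andP; split; nra.
have hv1 : `|(@dir R b).1| <= 1 by case: (b); rewrite /dir /= ?normr1 ?normr0.
have hv2 : `|(@dir R b).2| <= 1 by case: (b); rewrite /dir /= ?normr1 ?normr0.
have hG1 := HB1 u. have hG2 := HB2 u.
set y1 := eps * x.1. set y2 := eps * x.2. set v1 := (@dir R b).1. set v2 := (@dir R b).2.
have E1 : DPs1 (eps^+2) l x (dir b) = eps * (g1 u * (2*(y1*v1+y2*v2)) * l.1 + ((l.1*v2 - l.2*v1)*(g1 u*(2*y2)) + (l.1*y2 - l.2*y1)*(g2 u*(2*(y1*v1+y2*v2))*(2*y2) + g1 u*(2*v2)))).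
  by rewrite /DPs1 -/u /dU /Fs /y1 /y2 /v1 /v2; ring.
have E2 : DPs2 (eps^+2) l x (dir b) = eps * (g1 u * (2*(y1*v1+y2*v2)) * l.2 - ((l.1*v2 - l.2*v1)*(g1 u*(2*y1)) + (l.1*y2 - l.2*y1)*(g2 u*(2*(y1*v1+y2*v2))*(2*y1) + g1 u*(2*v1)))).
  by rewrite /DPs2 -/u /dU /Fs /y1 /y2 /v1 /v2; ring.
rewrite E1 E2 !normrM (gtr0_norm e0) !ler_pM2l //.
by split; rewrite /K; bnd.
Qed.

End Bound.

Lemma pd_Ps1 {R : realType} (c : R) l x b : pd b (Ps1 c l) x = DPs1 c l x (dir b).
Proof. by rewrite /pd; have [_ ->] := Ps1_der c l x (dir b). Qed.
Lemma pd_Ps2 {R : realType} (c : R) l x b : pd b (Ps2 c l) x = DPs2 c l x (dir b).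
Proof. by rewrite /pd; have [_ ->] := Ps2_der c l x (dir b). Qed.

Theorem lemma9 (R : realType) (Psi : @pt R -> @pt R) (l : @pt R) :
  in_H Psi ->
  {ae leb2, forall x, S0 x -> Psi x = l} ->
  exists Psit : R -> @pt R -> @pt R,
    (forall eps : R, 0 < eps <= 1 ->
       (forall i, smooth (vcomp i (Psit eps))) /\
       (exists M : R, forall x, F0cl x -> M < sqn x -> Psit eps x = (0, 0)) /\
       (forall x, F0cl x ->
          pd true (vcomp true (Psit eps)) x + pd false (vcomp false (Psit eps)) x = 0) /\
       (forall x, sqn x = 1 -> Psit eps x = l)) /\
    (forall e : R, 0 < e -> exists d : R, 0 < d /\
       forall eps : R, 0 < eps <= 1 -> eps < d ->
         forall x, F0 x -> forall i j : bool, `| pd j (vcomp i (Psit eps)) x | <= e).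
Proof.
move=> _ _.
exists (fun eps x => (Ps1 (eps^+2) l x, Ps2 (eps^+2) l x)).
have V1 : forall eps : R, vcomp true (fun x => (Ps1 (eps^+2) l x, Ps2 (eps^+2) l x)) = Ps1 (eps^+2) l by [].
have V2 : forall eps : R, vcomp false (fun x => (Ps1 (eps^+2) l x, Ps2 (eps^+2) l x)) = Ps2 (eps^+2) l by [].
split.
  move=> eps /andP[e0 e1]; split.
    by case; [rewrite V1|rewrite V2]; apply: smooth_P => n; [exact: P_Ps1|exact: P_Ps2].
  split.
    exists (3 / eps^+2) => x _ Hx.
    have [-> ->] := supp (eps^+2) l x (exprn_gt0 2 e0) Hx; by [].
  split.
    by move=> x _; rewrite V1 V2 !pd_Ps1 !pd_Ps2 div_free.
  move=> x sx.
  have c1 : eps^+2 <= 1 by rewrite expr_le1 // ltW.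
  have [-> ->] := bdry (eps^+2) l x c1 sx.
  by rewrite [RHS]surjective_pairing.
move=> e e0.
have [K [K0 HK]] := bound_lemma l.
exists (e / (K + 1)); split; first by rewrite divr_gt0 // ltr_wpDl.
move=> eps /andP[ep0 ep1] epd x _ i j.
have HeK : eps * K <= e.
  have : eps * (K + 1) < e by rewrite -ltr_pdivlMr // ltr_wpDl.
  have : eps * K <= eps * (K + 1) by rewrite (ler_wpM2l (ltW ep0)); lra.
  lra.
have [H1 H2] := HK eps ep0 x j.
by case: i; [rewrite V1 pd_Ps1|rewrite V2 pd_Ps2]; apply: le_trans HeK.
Qed.
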